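(* Let $\Omega=\{\Omega_1,\dots,\Omega_N\}$ be the vertex set of a directed weighted graph with (not necessarily symmetric) weight function $d$, let $1\le n<N$, and let $i,j\in\{1,\dots,n\}$. Let $x_1=MMJ(\Omega_i,\Omega_j~|~\Omega_{[1,n]})$, $t_1=MMJ(\Omega_i,\Omega_{n+1}~|~\Omega_{[1,n+1]})$, $t_2=MMJ(\Omega_{n+1},\Omega_j~|~\Omega_{[1,n+1]})$ and $x_2=\max(t_1,t_2)$. Then $MMJ(\Omega_i,\Omega_j~|~\Omega_{[1,n+1]})=\min(x_1,x_2)$.
   Context: $\Omega$ is a finite set of points indexed $\Omega_1,\dots,\Omega_N$, and $\Omega_{[1,n]}=\{\Omega_1,\dots,\Omega_n\}$. $d(x,y)\ge 0$ is the weight of the directed edge from $x$ to $y$ (possibly $d(x,y)\neq d(y,x)$). For a subset $S\subseteq\Omega$, a (directed) path from $i$ to $j$ in $S$ is a finite sequence of points of $S$ (at least two) starting at $i$ and ending at $j$, with no repeated points except that start and end may coincide when $i=j$. A jump of a path is $d(x,y)$ for consecutive points $x$ followed by $y$, and $max\_jump$ of a path is its largest jump. The Min-Max-Jump distance with context $S$ is $MMJ(i,j~|~S)=\min\{max\_jump(\epsilon): \epsilon \text{ a path from } i \text{ to } j \text{ in } S\}$ for $i,j\in S$, with $MMJ(i,i~|~S)=0$. *)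

(* Defs.v *)
From HB Require Import structures.
From mathcomp Require Import all_boot all_order all_algebra.
Set Implicit Arguments. Unset Strict Implicit. Unset Printing Implicit Defensive.
Import Order.TTheory GRing.Theory Num.Theory.
Local Open Scope ring_scope.

(* Points Omega_1..Omega_N are represented by the ordinals 'I_N
   (0-based: Omega_k is the ordinal k-1).  The weight function is
   d : 'I_N -> 'I_N -> R, not necessarily symmetric. *)

Section MMJ.
Variables (R : realDomainType) (N : nat) (d : 'I_N -> 'I_N -> R).

Definition is_path (S : {set 'I_N}) (i j : 'I_N) (p : seq 'I_N) : bool :=
  match p with
  | [::] => false
  | x0 :: s =>
      [&& x0 == i, last x0 s == j, s != [::], all (fun x => x \in S) p &
          (if i == j then uniq s else uniq p)]
  end.

Definition jumps (p : seq 'I_N) : seq R :=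
  match p with
  | [::] => [::]
  | x0 :: s => pairmap d x0 s
  end.

(* The largest jump of a path (paths have at least one jump). *)
Definition max_jump (p : seq 'I_N) : R :=
  match jumps p with
  | [::] => 0
  | a :: l => foldr Num.max a l
  end.

(* All sequences of length 2..N+1; every path (no repetitions except
   possibly start = end) has length at most N+1, so this list contains
   every path. *)
Definition candidates : seq (seq 'I_N) :=
  flatten [seq [seq tval t | t : k.-tuple 'I_N] | k <- iota 2 N].

(* The seed d i j is the
   max_jump of the direct path [:: i; j], which is a path whenever
   i, j \in S, i != j; so for i, j in S it does not affect the minimum. *)
Definition MMJ (S : {set 'I_N}) (i j : 'I_N) : R :=
  if i == j then 0
  else \big[Num.min/d i j]_(p <- candidates | is_path S i j p) max_jump p.

End MMJ.

Definition Omega_upto (N n : nat) : {set 'I_N} := [set k : 'I_N | (k < n)%N].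

(* Main.v *)
Require Import Defs.
From HB Require Import structures.
From mathcomp Require Import all_boot all_order all_algebra.
Import Order.TTheory GRing.Theory Num.Theory.
Local Open Scope ring_scope.

Section Aux.
Variables (R : realDomainType) (N : nat) (d : 'I_N -> 'I_N -> R).

Definition ed (c : R) (S : {set 'I_N}) : rel 'I_N :=
  fun a b => (d a b <= c) && (b \in S).

Lemma foldr_max_le (a c : R) l :
  (foldr Num.max a l <= c) = (a <= c) && all (fun r => r <= c) l.
Proof.
elim: l => [|b l IH] /=; first by rewrite andbT.
by rewrite ge_max IH andbCA.
Qed.

Lemma max_jump_le x s c : s != [::] ->
  (max_jump d (x :: s) <= c) = all (fun r => r <= c) (pairmap d x s).
Proof.
case: s => [|y s] //= _.
by rewrite /max_jump /= foldr_max_le.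
Qed.

Lemma path_ed c S x s :
  path (ed c S) x s = all (fun r => r <= c) (pairmap d x s) && all (mem S) s.
Proof.
elim: s x => [|y s IH] x //=.
by rewrite IH /ed andbACA.
Qed.

Lemma bigmin_le (I : Type) (r : seq I) (P : pred I) (F : I -> R) x c :
  (\big[Num.min/x]_(p <- r | P p) F p <= c) =
  (x <= c) || has (fun p => P p && (F p <= c)) r.
Proof.
elim: r => [|a r IH]; first by rewrite big_nil orbF.
rewrite big_cons /=; case: (P a) => //=.
by rewrite ge_min IH orbCA.
Qed.

Lemma cand_mem (p : seq 'I_N) : (2 <= size p)%N -> uniq p -> p \in candidates N.
Proof.
move=> h2 hu.
have hs : (size p <= N)%N.
  by move/card_uniqP: hu => <-; rewrite -[X in (_ <= X)%N](card_ord N) max_card.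
apply/flattenP; exists [seq tval t | t : (size p).-tuple 'I_N].
  apply/mapP; exists (size p) => //; rewrite mem_iota h2 /=.
  by apply: (leq_trans hs).
have -> : p = tval (in_tuple p) by [].
by apply: map_f; rewrite mem_enum.
Qed.

Definition walk (c : R) (S : {set 'I_N}) (a b : 'I_N) := exists s, path (ed c S) a s && (last a s == b).

Lemma mmj_le (S : {set 'I_N}) (a b : 'I_N) (c : R) : a != b -> a \in S -> b \in S ->
  (MMJ d S a b <= c) <-> walk c S a b.
Proof.
move=> hab ha hb; rewrite /MMJ (negbTE hab) bigmin_le; split.
  case/orP => [h|].
    by exists [:: b]; rewrite /= /ed h hb eqxx.
  case/hasP => [[|x0 s] _] //= /andP [/and5P [/eqP e0 hl hs hall hu] hle].
  move: e0 hl hall hle => -> hl hall hle; exists s; rewrite hl andbT path_ed -max_jump_le // hle /=.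
  by move: hall => /= /andP [].
case=> s /andP [hp /eqP hl]; apply/orP; right.
case: (shortenP hp) hl => q hq hu _ hl.
have hq0 : q != [::] by case: q hq hu hl => //= _ _ hl; rewrite -hl eqxx in hab.
apply/hasP; exists (a :: q).
  by apply: cand_mem => //; case: q hq0 {hq hu hl}.
move: hq; rewrite path_ed => /andP [hj hS].
rewrite /= eqxx hl eqxx hq0 ha hS (negbTE hab) -andbA; move: hu => /= -> /=.
by rewrite max_jump_le.
Qed.

Lemma mmj_ge0 (d_ge0 : forall x y, 0 <= d x y) (S : {set 'I_N}) (a b : 'I_N) :
  a != b -> a \in S -> b \in S -> 0 <= MMJ d S a b.
Proof.
move=> hab ha hb.
have [] := (@mmj_le S a b (MMJ d S a b) hab ha hb); move=> /(_ (lexx _)) [[|y s]].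
  by rewrite /= => /eqP e _; rewrite e eqxx in hab.
by case/andP=> /= /andP [/andP [h _] _] _ _; exact: le_trans (d_ge0 a y) h.
Qed.

End Aux.

(* Omega_{n+1} is the ordinal with value n (requires n < N). *)
Theorem theorem6p2 (R : realDomainType) (N : nat) (d : 'I_N -> 'I_N -> R)
    (d_ge0 : forall x y, 0 <= d x y)
    (n : nat) (hn1 : (1 <= n)%N) (hnN : (n < N)%N)
    (i j : 'I_N) (hi : (i < n)%N) (hj : (j < n)%N) :
  let w : 'I_N := Ordinal hnN in
  let x1 := MMJ d (Omega_upto N n) i j in
  let t1 := MMJ d (Omega_upto N n.+1) i w in
  let t2 := MMJ d (Omega_upto N n.+1) w j in
  let x2 := Num.max t1 t2 in
  MMJ d (Omega_upto N n.+1) i j = Num.min x1 x2.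
Proof.
move=> w x1 t1 t2 x2; have ML := @mmj_le R N d.
set S := Omega_upto N n; set S' := Omega_upto N n.+1.
have iS : i \in S by rewrite inE.
have jS : j \in S by rewrite inE.
have iS' : i \in S' by rewrite inE ltnW.
have jS' : j \in S' by rewrite inE ltnW.
have wS' : w \in S' by rewrite inE /=.
have hiw : i != w by apply/eqP => e; move: hi; rewrite e /= ltnn.
have hwj : w != j by apply/eqP => e; move: hj; rewrite -e /= ltnn.
have t1ge : 0 <= t1 by apply: mmj_ge0.
have [eij|hij] := eqVneq i j.
  rewrite /x1 eij /MMJ eqxx; apply/esym/min_idPl.
  by rewrite /x2 le_max t1ge.
have key c : (MMJ d S' i j <= c) = (Num.min x1 x2 <= c).
  rewrite ge_min ge_max; apply/idP/idP.
    move/(ML _ _ _ c hij iS' jS') => [s /andP [hp /eqP hl]].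
    case: (boolP (w \in s)) => hw.
      case/splitPr: hw hp hl => s1 s2.
      rewrite -cat_rcons cat_path last_cat last_rcons => /andP [h1 h2] hl.
      apply/orP; right; apply/andP; split.
        by apply/(ML _ _ _ c hiw iS' wS'); exists (rcons s1 w); rewrite h1 last_rcons eqxx.
      by apply/(ML _ _ _ c hwj wS' jS'); exists s2; rewrite h2 hl eqxx.
    apply/orP; left; apply/(ML _ _ _ c hij iS jS); exists s; rewrite hl eqxx andbT.
    apply: (sub_in_path (P := fun y => y != w)) hp; last first.
      by rewrite /= hiw /=; apply/allP => y hy; apply/eqP => e; by move: hw; rewrite -e hy.
    move=> a b _ hbw /andP [h1 h2]; rewrite /ed h1 /= /S inE.
    move: h2; rewrite /S' inE ltnS leq_eqVlt => /orP [/eqP e|//].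
    by case/eqP: hbw; apply: val_inj.
  case/orP => [/(ML _ _ _ c hij iS jS) [s /andP [hp hl]]| /andP [h1 h2]].
    apply/(ML _ _ _ c hij iS' jS'); exists s; rewrite hl andbT.
    apply: sub_path hp => a b /andP [h h']; rewrite /ed h /= /S' inE.
    by move: h'; rewrite /S inE => /ltnW.
  move/(ML _ _ _ c hiw iS' wS'): h1 => [s1 /andP [p1 /eqP l1]].
  move/(ML _ _ _ c hwj wS' jS'): h2 => [s2 /andP [p2 l2]].
  apply/(ML _ _ _ c hij iS' jS'); exists (s1 ++ s2).
  by rewrite cat_path last_cat l1 p1 p2 l2.
apply: le_anti; rewrite key lexx /= -key lexx //.
Qed.
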